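(* Let $\mathbb{K}$ be a field of characteristic $0$. For a positive integer $r$, let $\mu(r)$ be the least integer $h$ such that $(1,r,h,h,r,1)$ is the Hilbert function of a standard graded Artinian Gorenstein $\mathbb{K}$-algebra (socle degree $5$), and let $\delta(r)=r-\mu(r)$. Then for every integer $m\geq 3$, \[\delta\!\left(m+\binom{m+3}{4}\right)\geq\frac{m+5}{4}\binom{m}{3}.\]
   Context: Standard graded Artinian Gorenstein algebras $Q/I$ are taken with $I$ containing no linear forms, so the codimension equals $h_1$. *)

(* Defs.v *)
From HB Require Import structures.
From mathcomp Require Import all_boot all_order all_algebra.
From mathcomp Require Import mpoly.
From Stdlib Require Import ClassicalEpsilon.
Set Implicit Arguments. Unset Strict Implicit. Unset Printing Implicit Defensive.
Import Order.TTheory GRing.Theory.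
Local Open Scope ring_scope.

Definition homogeneous (K : fieldType) (n d : nat) (f : {mpoly K[n]}) : Prop :=
  forall m, m \in msupp f -> mdeg m = d.

Definition hcomp (K : fieldType) (n d : nat) (f : {mpoly K[n]}) : {mpoly K[n]} :=
  \sum_(m <- msupp f | mdeg m == d) f@_m *: 'X_[m].

Definition is_ideal (K : fieldType) (n : nat) (I : {mpoly K[n]} -> Prop) : Prop :=
  [/\ I 0,
      (forall f g, I f -> I g -> I (f + g)) &
      (forall f g, I f -> I (g * f))].

Definition is_homog_ideal (K : fieldType) (n : nat) (I : {mpoly K[n]} -> Prop) : Prop :=
  is_ideal I /\ forall f d, I f -> I (hcomp d f).

(* dim_K ((S + I)/I) = k, for a K-subspace S of Q:
   there are k elements of S, linearly independent modulo I,
   spanning S modulo I. *)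
Definition dim_mod (K : fieldType) (n : nat) (I S : {mpoly K[n]} -> Prop) (k : nat) : Prop :=
  exists b : 'I_k -> {mpoly K[n]},
    (forall i, S (b i)) /\
    (forall c : 'I_k -> K, I (\sum_(i < k) c i *: b i) -> forall i, c i = 0) /\
    (forall f, S f -> exists c : 'I_k -> K, I (f - \sum_(i < k) c i *: b i)).

Definition hilb_fun_is (K : fieldType) (n : nat) (I : {mpoly K[n]} -> Prop)
  (hf : nat -> nat) : Prop :=
  forall d, dim_mod I (homogeneous d) (hf d).

(* socle of A = Q/I, lifted to Q: f with x_j f in I for all j *)
Definition socle (K : fieldType) (n : nat) (I : {mpoly K[n]} -> Prop) : {mpoly K[n]} -> Prop :=
  fun f => forall j : 'I_n, I ('X_j * f).

Definition AG_with_hilb (K : fieldType) (n : nat) (I : {mpoly K[n]} -> Prop)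
  (hf : nat -> nat) : Prop :=
  [/\ is_homog_ideal I,
      (forall f, homogeneous 1 f -> I f -> f = 0),
      hilb_fun_is I hf,
      (exists d0, forall d, (d0 <= d)%N -> forall f, homogeneous d f -> I f)
      & dim_mod I (socle I) 1].

Definition seq_1rhhr1 (r h : nat) : nat -> nat :=
  fun d => nth 0%N [:: 1; r; h; h; r; 1]%N d.

Definition realizable (K : fieldType) (r h : nat) : Prop :=
  exists n (I : {mpoly K[n]} -> Prop), AG_with_hilb I (seq_1rhhr1 r h).

(* mu(r): least h with (1,r,h,h,r,1) an AG Hilbert function
   (chosen by classical choice; the paper presupposes existence) *)
Definition mu (K : fieldType) (r : nat) : nat :=
  epsilon (inhabits 0%N)
    (fun h => realizable K r h /\ forall h', realizable K r h' -> (h <= h')%N).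

Definition delta (K : fieldType) (r : nat) : int := (r%:Z - (mu K r)%:Z)%R.

(* Main.v *)
Require Import Defs.
From HB Require Import structures.
From mathcomp Require Import all_boot all_order all_algebra.
From mathcomp Require Import mpoly.
From mathcomp Require Import zify lra.
From Stdlib Require Import Classical ClassicalEpsilon.
Set Implicit Arguments. Unset Strict Implicit. Unset Printing Implicit Defensive.
Import Order.TTheory GRing.Theory Num.Theory.
Local Open Scope ring_scope.

Section Gen.
Variables (K : fieldType) (n : nat) (Fs : seq 'X_{1..n}).
Hypothesis Fs_uniq : uniq Fs.

Definition Lf (p : {mpoly K[n]}) : K := \sum_(c <- Fs) p@_c.
Definition Idl (g : {mpoly K[n]}) : Prop := forall h, Lf (g * h) = 0.

Lemma LfD p q : Lf (p + q) = Lf p + Lf q.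
Proof. by rewrite /Lf -big_split; apply: eq_bigr => c _; rewrite mcoeffD. Qed.
Lemma LfZ a p : Lf (a *: p) = a * Lf p.
Proof. by rewrite /Lf mulr_sumr; apply: eq_bigr => c _; rewrite mcoeffZ. Qed.
Lemma Lf0 : Lf 0 = 0.
Proof. by rewrite /Lf big1 // => c _; rewrite mcoeff0. Qed.
Lemma LfN p : Lf (- p) = - Lf p.
Proof. by rewrite /Lf -sumrN; apply: eq_bigr => c _; rewrite mcoeffN. Qed.
Lemma LfB p q : Lf (p - q) = Lf p - Lf q.
Proof. by rewrite LfD LfN. Qed.
Lemma Lf_sum (I : Type) (r : seq I) (P : pred I) (F : I -> {mpoly K[n]}) :
  Lf (\sum_(i <- r | P i) F i) = \sum_(i <- r | P i) Lf (F i).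
Proof.
elim: r => [|x r IH]; first by rewrite !big_nil Lf0.
by rewrite !big_cons; case: (P x); rewrite ?LfD IH.
Qed.

Lemma LX c : Lf 'X_[c] = (c \in Fs)%:R.
Proof.
rewrite /Lf; under eq_bigr do rewrite mcoeffX.
case: (boolP (c \in Fs)) => cF.
  rewrite (bigD1_seq c) //= eqxx big1 ?addr0 // => c' /negbTE.
  by rewrite eq_sym => ->.
by rewrite big_seq big1 // => c' c'F; case: eqP cF => // ->; rewrite c'F.
Qed.

Lemma Lmul g b : Lf (g * 'X_[b]) = \sum_(a <- msupp g) g@_a * ((a + b)%MM \in Fs)%:R.
Proof.
rewrite {1}(mpolyE g) mulr_suml Lf_sum; apply: eq_bigr => a _.
by rewrite -scalerAl LfZ -mpolyXD LX.
Qed.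

Lemma IdlP g : (forall b, Lf (g * 'X_[b]) = 0) -> Idl g.
Proof.
move=> H h; rewrite (mpolyE h) mulr_sumr Lf_sum big1 // => b _.
by rewrite -scalerAr LfZ H mulr0.
Qed.

Lemma Idl0 : Idl 0. Proof. by move=> h; rewrite mul0r Lf0. Qed.
Lemma IdlD f g : Idl f -> Idl g -> Idl (f + g).
Proof. by move=> Hf Hg h; rewrite mulrDl LfD Hf Hg addr0. Qed.
Lemma IdlM f g : Idl f -> Idl (g * f).
Proof. by move=> Hf h; rewrite -mulrA mulrCA Hf. Qed.
Lemma IdlZ c f : Idl f -> Idl (c *: f).
Proof. by move=> Hf h; rewrite -scalerAl LfZ Hf mulr0. Qed.

Lemma Idl_ideal : is_ideal Idl.
Proof. by split; [exact: Idl0 | exact: IdlD | move=> f g; exact: IdlM]. Qed.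

Lemma Idl_mon a : (forall b, (a + b)%MM \notin Fs) -> Idl 'X_[a].
Proof. by move=> H; apply: IdlP => b; rewrite -mpolyXD LX (negbTE (H b)). Qed.

Lemma Idl_mon2 a a' : (forall b, ((a + b)%MM \in Fs) = ((a' + b)%MM \in Fs)) ->
  Idl ('X_[a] - 'X_[a']).
Proof. by move=> H; apply: IdlP => b; rewrite mulrBl LfB -!mpolyXD !LX H subrr. Qed.

Variable D : nat.
Hypothesis Fs_deg : forall c, c \in Fs -> mdeg c = D.

Lemma Idl_hcomp f d : Idl f -> Idl (hcomp d f).
Proof.
move=> Hf; apply: IdlP => b.
have E : Lf (hcomp d f * 'X_[b]) =
   \sum_(a <- msupp f | mdeg a == d) f@_a * ((a + b)%MM \in Fs)%:R.
  rewrite /hcomp mulr_suml Lf_sum; apply: eq_bigr => a _.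
  by rewrite -scalerAl LfZ -mpolyXD LX.
rewrite E; have := Hf 'X_[b]; rewrite Lmul => H0.
case: (boolP (d + mdeg b == D)%N) => hD.
  rewrite -[RHS]H0 big_mkcond /=; apply: eq_bigr => a _.
  case: eqP => // /eqP ha.
  case: (boolP ((a + b)%MM \in Fs)) => hF; last by rewrite mulr0.
  move: (Fs_deg hF); rewrite mdegD => hab.
  by move: hD; rewrite -hab eqn_add2r eq_sym (negbTE ha).
rewrite big1 // => a /eqP ha.
case: (boolP ((a + b)%MM \in Fs)) => [/Fs_deg|]; last by rewrite mulr0.
by rewrite mdegD ha => hab; move: hD; rewrite hab eqxx.
Qed.

Lemma Idl_homog : is_homog_ideal Idl.
Proof. by split; [exact: Idl_ideal | move=> f d; exact: Idl_hcomp]. Qed.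

Lemma span_assemble k (b : 'I_k -> {mpoly K[n]}) (P : 'X_{1..n} -> Prop) :
  (forall a, P a -> exists c : 'I_k -> K, Idl ('X_[a] - \sum_i c i *: b i)) ->
  forall (r : seq 'X_{1..n}) (w : 'X_{1..n} -> K), (forall a, a \in r -> P a) ->
  exists c : 'I_k -> K, Idl (\sum_(a <- r) w a *: 'X_[a] - \sum_i c i *: b i).
Proof.
move=> hP; elim=> [|a r IH] w hr.
  exists (fun _ => 0); rewrite big_nil big1 ?subrr; first exact: Idl0.
  by move=> i _; rewrite scale0r.
have [c1 h1] := hP a (hr a (mem_head _ _)).
have [c2 h2] := IH w (fun x hx => hr x (mem_behead (s := a :: r) hx)).
exists (fun i => w a * c1 i + c2 i).
have -> : \sum_(x <- a :: r) w x *: 'X_[x] - \sum_i (w a * c1 i + c2 i) *: b i =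
   w a *: ('X_[a] - \sum_i c1 i *: b i) +
   (\sum_(x <- r) w x *: 'X_[x] - \sum_i c2 i *: b i).
  rewrite big_cons scalerBr scaler_sumr.
  under [X in _ - X = _]eq_bigr do rewrite scalerDl -scalerA.
  rewrite big_split /=; set A := \sum_(i < k) _; set B := \sum_(i < k) _.
  rewrite opprD !addrA; congr (_ + _); rewrite -!addrA; congr (_ + _).
  by rewrite addrC.
by apply: IdlD => //; apply: IdlZ.
Qed.

Lemma dim_mod_gen d (s : seq ('X_{1..n} * 'X_{1..n})) :
  uniq s ->
  (forall p, p \in s -> mdeg p.1 = d) ->
  (forall p q, p \in s -> q \in s -> ((p.1 + q.2)%MM \in Fs) = (p == q)) ->
  (forall a, mdeg a = d -> (forall b, (a + b)%MM \notin Fs) \/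
      exists2 p, p \in s & forall b, ((a + b)%MM \in Fs) = ((p.1 + b)%MM \in Fs)) ->
  dim_mod Idl (homogeneous d) (size s).
Proof.
move=> us hd hdual hspan.
pose x0 := (0%MM, 0%MM) : 'X_{1..n} * 'X_{1..n}.
exists (fun i => 'X_[(nth x0 s i).1]); split; [|split].
- move=> i a; rewrite msuppX inE => /eqP ->; apply: hd; exact: mem_nth.
- move=> c H i; have := H 'X_[(nth x0 s i).2].
  rewrite mulr_suml Lf_sum (bigD1 i) //= big1 ?addr0.
    by rewrite -scalerAl LfZ -mpolyXD LX hdual ?mem_nth // eqxx mulr1.
  move=> j hji; rewrite -scalerAl LfZ -mpolyXD LX hdual ?mem_nth //.
  by rewrite nth_uniq //; move: hji; rewrite -(inj_eq val_inj) /= => /negbTE ->; rewrite mulr0.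
- move=> f hf; rewrite {1}(mpolyE f).
  apply: (span_assemble (P := fun a => mdeg a = d)); last first.
    by move=> a ha; apply: hf.
  move=> a ha; case: (hspan a ha) => [H0|[p ps hp]].
    exists (fun _ => 0); rewrite big1 ?subr0; first exact: Idl_mon.
    by move=> i _; rewrite scale0r.
  have hi : (index p s < size s)%N by rewrite index_mem.
  exists (fun i => (i == Ordinal hi)%:R).
  rewrite (bigD1 (Ordinal hi)) //= big1 ?addr0; last first.
    by move=> j /negbTE ->; rewrite scale0r.
  rewrite eqxx scale1r nth_index //; exact: Idl_mon2.
Qed.

Lemma socle_gen c0 : c0 \in Fs -> dim_mod Idl (socle Idl) 1.
Proof.
move=> c0F; exists (fun _ => 'X_[c0]); split; [|split].
- move=> _ j; rewrite -mpolyXD; apply: Idl_mon => b.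
  apply/negP => /Fs_deg; rewrite !mdegD mdeg1 (Fs_deg c0F); lia.
- move=> c H i; have := H 1; rewrite big_ord1 mulr1 LfZ LX c0F mulr1.
  by rewrite (ord1 i).
- move=> f hf; exists (fun _ => Lf f); rewrite big_ord1.
  apply: IdlP => b; rewrite mulrBl LfB -scalerAl LfZ -mpolyXD LX.
  case: (eqVneq b 0%MM) => [->|hb].
    by rewrite mpolyX0 mulr1 addm0 c0F mulr1 subrr.
  have [j hj] : exists j, b j != 0%N.
    apply/existsP; apply: contraR hb; rewrite negb_exists => /forallP h.
    by apply/eqP/mnmP => j; rewrite mnm0E; move: (h j); rewrite negbK => /eqP.
  have hbj : b = (U_(j) + (b - U_(j)))%MM by rewrite addmC submK // lep1mP.
  have -> : (c0 + b)%MM \in Fs = false.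
    apply/negP => /Fs_deg; rewrite mdegD (Fs_deg c0F) => /eqP.
    by rewrite -{2}(addn0 D) eqn_add2l mdeg_eq0 (negbTE hb).
  rewrite mulr0 subr0 hbj mpolyXD mulrA [f * _]mulrC.
  by apply: hf.
Qed.

Lemma no_forms d (s : seq ('X_{1..n} * 'X_{1..n})) :
  (forall p q, p \in s -> q \in s -> ((p.1 + q.2)%MM \in Fs) = (p == q)) ->
  (forall a, mdeg a = d -> exists2 p, p \in s & p.1 = a) ->
  forall f, homogeneous d f -> Idl f -> f = 0.
Proof.
move=> hdual hall f hf If; apply/mpolyP => a; rewrite mcoeff0.
case: (boolP (a \in msupp f)) => ha; last by rewrite memN_msupp_eq0.
have [p ps hpa] := hall a (hf a ha).
have := If 'X_[p.2]; rewrite Lmul big_seq.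
rewrite (eq_bigr (fun a' => f@_a' * (a' == a)%:R)); last first.
  move=> a' ha'; have [p' ps' hpa'] := hall a' (hf a' ha').
  congr (_ * _%:R); have e := hdual p' p ps' ps; rewrite hpa' in e; rewrite e.
  case: (eqVneq p' p) => [ep|ne].
    by rewrite -hpa' -hpa ep !eqxx.
  case: (eqVneq a' a) => // ea.
  by move: e; rewrite ea -hpa hdual // eqxx (negbTE ne).
rewrite -big_seq (bigD1_seq a) ?msupp_uniq //= eqxx mulr1 big1 ?addr0 //.
by move=> a' /negbTE ->; rewrite mulr0.
Qed.

End Gen.

Definition sb (k d : nat) : seq 'X_{1..k} :=
  [seq s2m t | t : d.-tuple 'I_k <- enum (basis k d)].

Section Spec.
Variable m' : nat.
Local Notation mx := m'.+1.
Definition Q4 : seq 'X_{1..mx} := sb mx 4.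
Local Notation N := (size Q4).
Local Notation n := (mx + N)%N.

Definition ix (v : 'X_{1..mx}) : 'X_{1..n} :=
  [multinom (match split i with inl j => v j | inr _ => 0%N end) | i < n].
Definition iy (v : 'X_{1..N}) : 'X_{1..n} :=
  [multinom (match split i with inl _ => 0%N | inr j => v j end) | i < n].
Definition xm (a : 'X_{1..n}) : 'X_{1..mx} := [multinom a (lshift N j) | j < mx].
Definition ym (a : 'X_{1..n}) : 'X_{1..N} := [multinom a (rshift mx j) | j < N].

Lemma splitl (j : 'I_mx) : split (lshift N j) = inl j.
Proof. exact: (@unsplitK mx N (inl j)). Qed.
Lemma splitr (j : 'I_N) : split (rshift mx j) = inr j.
Proof. exact: (@unsplitK mx N (inr j)). Qed.

Lemma xm_ix v : xm (ix v) = v.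
Proof. by apply/mnmP => j; rewrite !mnmE splitl. Qed.
Lemma ym_ix v : ym (ix v) = 0%MM.
Proof. by apply/mnmP => j; rewrite !mnmE splitr. Qed.
Lemma xm_iy v : xm (iy v) = 0%MM.
Proof. by apply/mnmP => j; rewrite !mnmE splitl. Qed.
Lemma ym_iy v : ym (iy v) = v.
Proof. by apply/mnmP => j; rewrite !mnmE splitr. Qed.
Lemma xmD a b : xm (a + b)%MM = (xm a + xm b)%MM.
Proof. by apply/mnmP => j; rewrite !mnmE. Qed.
Lemma ymD a b : ym (a + b)%MM = (ym a + ym b)%MM.
Proof. by apply/mnmP => j; rewrite !mnmE. Qed.

Lemma mono_eq a b : xm a = xm b -> ym a = ym b -> a = b.
Proof.
move=> /mnmP hx /mnmP hy; apply/mnmP => i.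
case: (splitP i) => [j hj|j hj].
  have -> : i = lshift N j by apply/val_inj.
  by have := hx j; rewrite !mnmE.
have -> : i = rshift mx j by apply/val_inj.
by have := hy j; rewrite !mnmE.
Qed.

Lemma mono_split a : a = (ix (xm a) + iy (ym a))%MM.
Proof.
by apply: mono_eq; rewrite ?xmD ?ymD ?xm_ix ?ym_ix ?xm_iy ?ym_iy ?addm0 ?add0m.
Qed.

Lemma mdeg_split a : mdeg a = (mdeg (xm a) + mdeg (ym a))%N.
Proof.
by rewrite !mdegE big_split_ord; congr (_ + _)%N; apply: eq_bigr => j _; rewrite mnmE.
Qed.

Lemma mdeg_ix v : mdeg (ix v) = mdeg v.
Proof. by rewrite mdeg_split xm_ix ym_ix mdeg0 addn0. Qed.
Lemma mdeg_iy v : mdeg (iy v) = mdeg v.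
Proof. by rewrite mdeg_split xm_iy ym_iy mdeg0. Qed.

Lemma Q4_uniq : uniq Q4.
Proof. exact: uniq_basis. Qed.
Lemma inQ4 v : (v \in Q4) = (mdeg v == 4%N).
Proof. by rewrite basis_cover. Qed.
Lemma sb_mem d v : (v \in sb mx d) = (mdeg v == d).
Proof. by rewrite basis_cover. Qed.

Definition Uy (v : 'X_{1..mx}) : 'X_{1..N} :=
  [multinom (nth 0%MM Q4 k == v : nat) | k < N].

Lemma Uy_nth (k : 'I_N) : Uy (nth 0%MM Q4 k) = U_(k)%MM.
Proof.
apply/mnmP => j; rewrite !mnmE; congr nat_of_bool.
by rewrite nth_uniq ?Q4_uniq // eq_sym.
Qed.


Lemma Uy_ex v : v \in Q4 -> exists k : 'I_N, Uy v = U_(k)%MM /\ nth 0%MM Q4 k = v.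
Proof.
move=> h; have hi : (index v Q4 < N)%N by rewrite index_mem.
exists (Ordinal hi); rewrite -Uy_nth /= nth_index //.
Qed.

Lemma mdeg_Uy v : v \in Q4 -> mdeg (Uy v) = 1%N.
Proof. by case/Uy_ex => k [-> _]; rewrite mdeg1. Qed.

Lemma Uy_inj v w : v \in Q4 -> w \in Q4 -> Uy v = Uy w -> v = w.
Proof.
move=> /Uy_ex [k [-> <-]] /Uy_ex [l [-> <-]] /eqP; rewrite eq_mnm1 => /eqP -> //.
Qed.

Lemma deg1_Uy (u : 'X_{1..N}) : mdeg u = 1%N -> exists2 v, v \in Q4 & u = Uy v.
Proof.
move=> /eqP /mdeg1P [k /eqP ->]; exists (nth 0%MM Q4 k); last by rewrite Uy_nth.
exact: mem_nth.
Qed.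

Definition Fs : seq 'X_{1..n} := [seq (iy (Uy v) + ix v)%MM | v <- Q4].

Lemma inFs c : (c \in Fs) = has (fun v => (ym c == Uy v) && (xm c == v)) Q4.
Proof.
apply/mapP/hasP => [[v hv ->]|[v hv /andP [/eqP e1 /eqP e2]]].
  by exists v => //; rewrite ymD xmD ym_ix ym_iy xm_ix xm_iy addm0 add0m !eqxx.
by exists v => //; rewrite (mono_split c) e1 e2 addmC.
Qed.

Lemma inFs_Uy c v0 : v0 \in Q4 -> ym c = Uy v0 -> (c \in Fs) = (xm c == v0).
Proof.
move=> h0 e; rewrite inFs; apply/hasP/idP => [[v hv /andP [/eqP e1 /eqP e2]]|/eqP e2].
  by rewrite e2 (Uy_inj hv h0) // -e1 e.
by exists v0 => //; rewrite e e2 !eqxx.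
Qed.

Lemma inFs_deg c : mdeg (ym c) != 1%N -> c \notin Fs.
Proof.
move=> h; rewrite inFs; apply/hasP => [[v hv /andP [/eqP e1 _]]].
by move: h; rewrite e1 mdeg_Uy.
Qed.

Lemma inFs_xdeg c : c \in Fs -> mdeg (xm c) = 4%N.
Proof.
by rewrite inFs => /hasP [v hv /andP [_ /eqP ->]]; apply/eqP; rewrite -inQ4.
Qed.

Lemma Fs_uniq : uniq Fs.
Proof.
rewrite map_inj_uniq ?Q4_uniq // => v w /(congr1 xm).
by rewrite !xmD !xm_ix !xm_iy !add0m.
Qed.

Lemma Fs_deg c : c \in Fs -> mdeg c = 5%N.
Proof.
move=> h; rewrite mdeg_split (inFs_xdeg h).
move: h; rewrite inFs => /hasP [v hv /andP [/eqP -> _]].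
by rewrite mdeg_Uy.
Qed.

Definition e0 : 'X_{1..mx} := U_(ord0)%MM.
Definition pad (r : 'X_{1..mx}) : 'X_{1..mx} := (e0 *+ (4 - mdeg r))%MM.
Definition sk (r : 'X_{1..mx}) : 'X_{1..n} := (iy (Uy (r + pad r)) + ix (pad r))%MM.

Lemma mdeg_pad r : mdeg (pad r) = (4 - mdeg r)%N.
Proof. by rewrite /pad mdegMn mdeg1 mul1n. Qed.

Lemma padQ r : (mdeg r <= 4)%N -> (r + pad r)%MM \in Q4.
Proof. by move=> h; rewrite inQ4 mdegD mdeg_pad; apply/eqP; lia. Qed.

Lemma xm_sk r : xm (sk r) = pad r.
Proof. by rewrite xmD xm_iy xm_ix add0m. Qed.
Lemma ym_sk r : ym (sk r) = Uy (r + pad r).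
Proof. by rewrite ymD ym_iy ym_ix addm0. Qed.
Lemma mdeg_sk r : (mdeg r <= 4)%N -> mdeg (sk r) = (5 - mdeg r)%N.
Proof.
move=> h; rewrite mdeg_split xm_sk ym_sk mdeg_Uy ?padQ // mdeg_pad; lia.
Qed.

Definition Sd (d : nat) : seq ('X_{1..n} * 'X_{1..n}) :=
  [seq (ix v, sk v) | v <- if (d <= 4)%N then sb mx d else [::]] ++
  [seq (sk r, ix r) | r <- if (1 <= d <= 5)%N then sb mx (5 - d) else [::]].

Lemma memS d p : p \in Sd d ->
  (exists2 v, (mdeg v = d /\ d <= 4)%N & p = (ix v, sk v)) \/
  (exists2 r, (mdeg r = 5 - d /\ 1 <= d <= 5)%N & p = (sk r, ix r)).
Proof.
rewrite mem_cat => /orP [] /mapP [v].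
  case: ifP => // hd; rewrite sb_mem => /eqP hv ->; left; by exists v.
case: ifP => // hd; rewrite sb_mem => /eqP hv ->; right; by exists v.
Qed.

Lemma memS1 v : (mdeg v <= 4)%N -> (ix v, sk v) \in Sd (mdeg v).
Proof.
by move=> h; rewrite mem_cat; apply/orP; left; apply/mapP; exists v; rewrite ?h ?sb_mem.
Qed.

Lemma memS2 r d : mdeg r = (5 - d)%N -> (1 <= d <= 5)%N -> (sk r, ix r) \in Sd d.
Proof.
move=> hr hd; rewrite mem_cat; apply/orP; right; apply/mapP; exists r => //.
by rewrite hd sb_mem hr.
Qed.

Lemma ym_ix_sk v r : (mdeg r <= 4)%N -> ix v != sk r.
Proof.
move=> h; apply/negP => /eqP /(congr1 ym); rewrite ym_ix ym_sk => /(congr1 mdeg).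
by rewrite mdeg0 mdeg_Uy ?padQ.
Qed.

Lemma ix_inj : injective ix.
Proof. by move=> v w /(congr1 xm); rewrite !xm_ix. Qed.

Lemma sk_inj r r' : (mdeg r <= 4)%N -> (mdeg r' <= 4)%N -> sk r = sk r' -> r = r'.
Proof.
move=> h h' e; have ex := congr1 xm e; have ey := congr1 ym e.
rewrite !xm_sk in ex; rewrite !ym_sk in ey.
have := Uy_inj (padQ h) (padQ h') ey; rewrite ex; exact: addIm.
Qed.

Lemma S_uniq d : uniq (Sd d).
Proof.
rewrite cat_uniq; apply/and3P; split.
- rewrite map_inj_uniq; first by case: ifP => // _; exact: uniq_basis.
  by move=> v w /(congr1 fst) /= /(congr1 xm); rewrite !xm_ix.
- apply/hasP => [[p /mapP [r hr ->] /mapP [v hv /(congr1 fst) /= e]]].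
  move: hr hv; case: ifP => // hd; case: ifP => // hd'.
  rewrite !sb_mem => /eqP hr _.
  have h4 : (mdeg r <= 4)%N by lia.
  by move: (ym_ix_sk v h4); rewrite e eqxx.
- rewrite map_inj_in_uniq; first by case: ifP => // _; exact: uniq_basis.
  move=> r r'; case: ifP => // hd; rewrite !sb_mem => /eqP hr /eqP hr' /(congr1 fst) /=.
  by apply: sk_inj; lia.
Qed.

Lemma S_deg d p : p \in Sd d -> mdeg p.1 = d.
Proof.
case/memS => [[v [hv hd] ->]|[r [hr hd] ->]] /=; first by rewrite mdeg_ix.
by rewrite mdeg_sk; lia.
Qed.

Lemma S_dual d p q : p \in Sd d -> q \in Sd d -> ((p.1 + q.2)%MM \in Fs) = (p == q).
Proof.
case/memS => [[v [hv hd] ->]|[r [hr hd] ->]]; case/memS => [[v' [hv' hd'] ->]|[r' [hr' hd'] ->]] /=.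
- rewrite (@inFs_Uy _ (v' + pad v')%MM) ?padQ ?hv' //; last first.
    by rewrite ymD ym_ix ym_sk add0m.
  rewrite xmD xm_ix xm_sk eqm_add2r.
  case: (eqVneq v v') => [->|ne]; first by rewrite !eqxx.
  by apply/esym/negP => /eqP /(congr1 fst) /= /(congr1 xm); rewrite !xm_ix => e; rewrite e eqxx in ne.
- rewrite (negbTE (inFs_deg _)); last by rewrite ymD !ym_ix add0m mdeg0.
  by apply/esym/negP => /eqP /(congr1 fst) /= /eqP; apply/negP/ym_ix_sk; lia.
- rewrite (negbTE (inFs_deg _)); last first.
    by rewrite ymD !ym_sk mdegD !mdeg_Uy ?padQ //; lia.
  by apply/esym/negP => /eqP /(congr1 fst) /= /esym /eqP; apply/negP/ym_ix_sk; lia.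
- rewrite (@inFs_Uy _ (r + pad r)%MM) ?padQ //; last 2 first.
  + lia.
  + by rewrite ymD ym_ix ym_sk addm0.
  rewrite xmD xm_ix xm_sk [X in X == _]addmC eqm_add2r.
  case: (eqVneq r' r) => [->|ne]; first by rewrite !eqxx.
  apply/esym/negP => /eqP /(congr1 fst) /= /sk_inj e; rewrite e ?eqxx in ne => //; lia.
Qed.

Lemma S_span d a : mdeg a = d -> (forall b, (a + b)%MM \notin Fs) \/
  exists2 p, p \in Sd d & forall b, ((a + b)%MM \in Fs) = ((p.1 + b)%MM \in Fs).
Proof.
move=> hd; have hdeg := mdeg_split a.
have hyb : forall b, (mdeg (ym (a + b)%MM) = mdeg (ym a) + mdeg (ym b))%N.
  by move=> b; rewrite ymD mdegD.
case: (ltngtP (mdeg (ym a)) 1) => hu.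
- have u0 : ym a = 0%MM by apply/eqP; rewrite -mdeg_eq0; lia.
  case: (leqP (mdeg (xm a)) 4) => hv.
    right; exists (ix (xm a), sk (xm a)).
      by rewrite -hd hdeg u0 mdeg0 addn0; apply: memS1.
    have -> : ix (xm a) = a by apply: mono_eq; rewrite ?xm_ix ?ym_ix ?u0.
    by [].
  left => b; apply/negP => /inFs_xdeg; rewrite xmD mdegD; lia.
- left => b; apply: inFs_deg; rewrite hyb; lia.
- have [w hw hu'] := deg1_Uy hu.
  have w4 : mdeg w = 4%N by apply/eqP; rewrite -inQ4.
  case: (boolP (xm a <= w)%MM) => hvw.
    set r := (w - xm a)%MM.
    have hwr : w = (r + xm a)%MM by rewrite /r submK.
    have hr : mdeg r = (4 - mdeg (xm a))%N.
      by move: w4; rewrite hwr mdegD; lia.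
    have hr4 : (mdeg r <= 4)%N by lia.
    have hsum : mdeg w = (mdeg r + mdeg (xm a))%N by rewrite {1}hwr mdegD.
    right; exists (sk r, ix r).
      apply: memS2; lia.
    move=> b; rewrite -[(_, _).1]/(sk r).
    case: (eqVneq (ym b) 0%MM) => hb.
      rewrite (@inFs_Uy _ w) //; last by rewrite ymD hb addm0.
      rewrite (@inFs_Uy _ (r + pad r)%MM) ?padQ //; last by rewrite ymD ym_sk hb addm0.
      rewrite !xmD xm_iy xm_ix add0m {1}hwr [(r + pad r)%MM]addmC eqm_add2l.
      by rewrite [X in X == _]addmC eqm_add2r.
    rewrite -mdeg_eq0 in hb.
    have h1 : (a + b)%MM \notin Fs by apply: inFs_deg; rewrite hyb; lia.
    have h2 : (sk r + b)%MM \notin Fs.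
      by apply: inFs_deg; rewrite ymD ym_sk mdegD mdeg_Uy ?padQ //; lia.
    by rewrite (negbTE h1) (negbTE h2).
  left => b; case: (eqVneq (ym b) 0%MM) => hb.
    rewrite (@inFs_Uy _ w) //; last by rewrite ymD hb addm0.
    rewrite xmD; apply/negP => /eqP e; move: hvw; rewrite -e.
    by rewrite lem_addr.
  by apply: inFs_deg; rewrite hyb; rewrite -mdeg_eq0 in hb; lia.
Qed.

Lemma S1_cover a : mdeg a = 1%N -> exists2 p, p \in Sd 1 & p.1 = a.
Proof.
move=> h; have hdeg := mdeg_split a.
case: (eqVneq (mdeg (ym a)) 0%N) => hu.
  have u0 : ym a = 0%MM by apply/eqP; rewrite -mdeg_eq0 hu.
  exists (ix (xm a), sk (xm a)); last by apply: mono_eq; rewrite ?xm_ix ?ym_ix ?u0.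
  have -> : 1%N = mdeg (xm a) by lia.
  apply: memS1; lia.
have hu1 : mdeg (ym a) = 1%N by lia.
have [w hw hu'] := deg1_Uy hu1.
have w4 : mdeg w = 4%N by apply/eqP; rewrite -inQ4.
have x0 : xm a = 0%MM by apply/eqP; rewrite -mdeg_eq0; lia.
exists (sk w, ix w); first by apply: memS2; lia.
have pw : pad w = 0%MM by rewrite /pad w4 mulm0n.
apply: mono_eq; rewrite ?xm_sk ?ym_sk ?pw ?x0 ?addm0 //.
Qed.

End Spec.

Lemma size_S m' d : size (Sd m' d) =
  ((if (d <= 4)%N then 'C(d + m', d) else 0) +
   (if (1 <= d <= 5)%N then 'C(5 - d + m', 5 - d) else 0))%N.
Proof.
rewrite /Sd size_cat !size_map.
by congr (_ + _)%N; case: ifP => _ //; rewrite size_map -cardE card_sorted_tuples.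
Qed.

Lemma realizable_ex (K : fieldType) m' :
  realizable K (m'.+1 + 'C(m'.+1 + 3, 4)) ('C(2 + m', 2) + 'C(3 + m', 3)).
Proof.
exists (m'.+1 + size (Q4 m'))%N, (Idl (K := K) (Fs m')); split.
- exact: (Idl_homog K (@Fs_uniq m') (@Fs_deg m')).
- move=> f; apply: (no_forms (@Fs_uniq m') (@S_dual m' 1) (@S1_cover m')).
- move=> d.
  have := dim_mod_gen K (@Fs_uniq m') (@S_uniq m' d) (@S_deg m' d)
    (@S_dual m' d) (@S_span m' d).
  suff -> : size (Sd m' d) = seq_1rhhr1 (m'.+1 + 'C(m'.+1 + 3, 4))
      ('C(2 + m', 2) + 'C(3 + m', 3)) d by [].
  rewrite size_S /seq_1rhhr1.
  have e4 : (m'.+1 + 3 = 4 + m')%N by lia.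
  case: d => [|[|[|[|[|[|d]]]]]] /=; rewrite ?bin0 ?bin1 ?e4 ?addn0 ?add0n //.
  all: rewrite ?nth_nil //.
  + by rewrite (_ : (5 - 3 = 2)%N) // addnC.
  + by rewrite (_ : (5 - 4 = 1)%N) // addnC.
- exists 6%N => d hd f hf.
  rewrite (mpolyE f) big_seq; apply: (big_ind (Idl (K := K) (Fs m'))).
  - by apply: Idl0.
  - by move=> x y; apply: IdlD.
  move=> a ha; apply: IdlZ; apply: (Idl_mon (@Fs_uniq m')) => b; apply/negP => /(Fs_deg (m' := m')).
  rewrite mdegD (hf a ha); lia.
- apply: (socle_gen K (@Fs_uniq m') (@Fs_deg m') (c0 := (iy (Uy (0 + pad 0)) + ix (0 + pad 0))%MM)).
  by apply: map_f; apply: padQ; rewrite mdeg0.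
Qed.

Lemma least_ex (P : nat -> Prop) k h : (h <= k)%N -> P h ->
  exists h0, P h0 /\ forall h', P h' -> (h0 <= h')%N.
Proof.
elim: k h => [|k IH] h hk Ph.
  exists h; split => // h' _; lia.
case: (classic (exists h', (h' < h)%N /\ P h')) => [[h' [lt Ph']]|no].
  apply: (IH h') => //; lia.
exists h; split => // h' Ph'; case: (leqP h h') => // lt.
by exfalso; apply: no; exists h'.
Qed.

Lemma mu_le (K : fieldType) r h : realizable K r h -> (mu K r <= h)%N.
Proof.
move=> hr.
have ex := @least_ex (realizable K r) h h (leqnn h) hr.
have := epsilon_spec (inhabits 0%N)
  (fun h => realizable K r h /\ forall h', realizable K r h' -> (h <= h')%N) ex.
by rewrite -/(mu K r) => [[_ H]]; apply: H.
Qed.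

Lemma binid q : (4 * (q.+3 + 'C(4 + q.+2, 4)) =
  4 * ('C(2 + q.+2, 2) + 'C(3 + q.+2, 3)) + (q.+3 + 5) * 'C(q.+3, 3))%N.
Proof.
have e4 : forall k, ('C(k.+3, 4) * 24 = k.+3 * k.+2 * k.+1 * k)%N.
  move=> k; have := bin_ffact k.+3 4; rewrite !ffactnS ffactn0 muln1 => ->.
  by rewrite /= ?mulnA.
have e3 : forall k, ('C(k.+2, 3) * 6 = k.+2 * k.+1 * k)%N.
  move=> k; have := bin_ffact k.+2 3; rewrite !ffactnS ffactn0 muln1 => ->.
  by rewrite /= ?mulnA.
have e2 : forall k, ('C(k.+1, 2) * 2 = k.+1 * k)%N.
  move=> k; have := bin_ffact k.+1 2; rewrite !ffactnS ffactn0 muln1 => ->.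
  by rewrite /= ?mulnA.
have := e4 (q.+3); have := e3 (q.+3); have := e3 q.+1; have := e2 (q.+3).
rewrite !addSn !addnS !add0n /=.
nia.
Qed.

Theorem proposition3p14 (K : fieldType) (hK : [pchar K] =i pred0) (m : nat) :
  (3 <= m)%N ->
  ((m + 5)%:R / 4%:R) * ('C(m, 3))%:R <=
    ((delta K (m + 'C(m + 3, 4))%N)%:~R : rat).
Proof.
case: m => [|[|[|q]]] // _.
have hmu := mu_le (realizable_ex K q.+2).
have e : (q.+3 + 3 = 4 + q.+2)%N by lia.
rewrite e in hmu *.
have E := binid q.
rewrite /delta intrB -!pmulrn.
set r := (q.+3 + 'C(4 + q.+2, 4))%N in hmu E *.
set h := ('C(2 + q.+2, 2) + 'C(3 + q.+2, 3))%N in hmu E.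
set mu0 := mu K r in hmu *.
have Er : 4%:R * r%:R = 4%:R * h%:R + ((q.+3 + 5) * 'C(q.+3, 3))%:R :> rat.
  by rewrite -!natrM -natrD E.
have Hm : mu0%:R <= h%:R :> rat by rewrite ler_nat.
rewrite mulrAC -natrM.
move: Er Hm; set X := ((q.+3 + 5) * 'C(q.+3, 3))%N%:R.
move=> Er Hm; lra.
Qed.
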